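(* Let $\mathcal L:\mathbb F^{q\times q}\to\mathbb F^{n\times n}$ be $*$-linear with matricization $L$ and Choi matrix $\mathbb L$, let $m=\operatorname{rank}\mathbb L$, choose $L_1,\ldots,L_m\in\mathbb F^{n\times q}$ with $\operatorname{span}\{L_1,\ldots,L_m\}=\operatorname{span}\{L_{ij}\}$, and let $A_1,\ldots,A_m$ and $\mathbb H=\mathbb H(\mathcal L;L_1,\ldots,L_m)$ be given by the construction below. Then $$\mathcal L(V)=\sum_{k,l=1}^m\mathbb H_{kl}A_lVA_k^*\ (V\in\mathbb F^{q\times q}),\qquad L=\sum_{k,l=1}^m\mathbb H_{kl}\,\overline{A_k}\otimes A_l,$$ $$\mathbb L=\sum_{k,l=1}^m\mathbb H_{kl}\operatorname{vec}_{n\times q}(A_l)\operatorname{vec}_{n\times q}(\overline{A_k})^T=\widehat A^*\mathbb H^T\widehat A,$$ where $\widehat A^*=[\operatorname{vec}_{n\times q}(A_1)\ \cdots\ \operatorname{vec}_{n\times q}(A_m)]\in\mathbb F^{nq\times m}$. Moreover $\mathbb H$ is Hermitian and invertible.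
   Context: $\mathbb F\in\{\mathbb R,\mathbb C\}$; $\otimes$ Kronecker product, $\circ$ Hadamard product, $\vec{\mathbf 1}_p$ all-ones vector, $\overline{X}$ entrywise conjugate, $\operatorname{vec}$ column-stacking vectorization. For linear $\mathcal L:\mathbb F^{q\times q}\to\mathbb F^{n\times n}$: matricization $L\in\mathbb F^{n^2\times q^2}$ with $L\operatorname{vec}(V)=\operatorname{vec}(\mathcal L(V))$, in blocks $L=[L_{ij}]$, $1\le i\le n$, $1\le j\le q$, $L_{ij}\in\mathbb F^{n\times q}$; Choi matrix $\mathbb L=[\mathcal L(\mathcal E^{(q)}_{ij})]_{i,j=1}^q$. $*$-linear: $\mathcal L(V^* )=\mathcal L(V)^*$. Construction: with $m=\operatorname{rank}\mathbb L=\dim\operatorname{span}\{L_{ij}\}$ and $L_1,\ldots,L_m$ spanning $\operatorname{span}\{L_{ij}\}$, let $L_{ij}=\sum_k\alpha^{ij}_kL_k$ (unique) and $L_k=\sum_{i,j}\beta^k_{ij}L_{ij}$ (any choice of scalars); $A_k$ has $(i,j)$ entry $\overline{\alpha^{ij}_k}$, $B_k$ has $(i,j)$ entry $\beta^k_{ij}$, and $\mathbb H(\mathcal L;L_1,\ldots,L_m)=[\vec{\mathbf 1}_n^*(B_k\circ\overline{L_l})\vec{\mathbf 1}_q]_{k,l=1}^m$. *)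

(* Defs.v *)
(* F = R is modelled by an arbitrary [R : realType] (with
   conjugation = identity), F = C by [R[i]] (complex numbers over R, from
   mathcomp-real-closed) with conjugation [Num.conj]. *)
From HB Require Import structures.
From mathcomp Require Import all_boot all_order all_algebra.
From mathcomp Require Import complex.
From mathcomp Require Import reals.
Set Implicit Arguments. Unset Strict Implicit. Unset Printing Implicit Defensive.
Import Order.TTheory GRing.Theory Num.Theory.
Local Open Scope ring_scope.

(* an index k : 'I_(r*c) of a column-stacked r x c matrix corresponds to
   the entry (k %% r, k %/ r); conversely entry (i, j) sits at j*r + i.     *)

Lemma cs_index_proof r c (i : 'I_r) (j : 'I_c) : (j * r + i < r * c)%N.
Proof.
have hi := ltn_ord i; have hj := ltn_ord j.
apply: (@leq_trans (j.+1 * r)); first by rewrite mulSn addnC ltn_add2r.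
by rewrite mulnC leq_mul2l hj orbT.
Qed.

Lemma cs_row_proof r c (k : 'I_(r * c)) : (k %% r < r)%N.
Proof.
have hk := ltn_ord k; move: (nat_of_ord k) hk => k' hk; clear k.
by case: r hk => [|r] hk; [rewrite mul0n in hk | rewrite ltn_pmod].
Qed.

Lemma cs_col_proof r c (k : 'I_(r * c)) : (k %/ r < c)%N.
Proof.
have hk := ltn_ord k; move: (nat_of_ord k) hk => k' hk; clear k.
case: r hk => [|r] hk; first by rewrite mul0n in hk.
by rewrite ltn_divLR // mulnC.
Qed.

Definition cs_index r c (i : 'I_r) (j : 'I_c) : 'I_(r * c) :=
  Ordinal (cs_index_proof i j).
Definition cs_row r c (k : 'I_(r * c)) : 'I_r := Ordinal (cs_row_proof k).
Definition cs_col r c (k : 'I_(r * c)) : 'I_c := Ordinal (cs_col_proof k).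

Section Defs.
Variables (F : fieldType) (cj : F -> F).

Definition mconj r c (X : 'M[F]_(r, c)) : 'M[F]_(r, c) := map_mx cj X.
Definition adj r c (X : 'M[F]_(r, c)) : 'M[F]_(c, r) := (mconj X)^T.

Definition cvec r c (X : 'M[F]_(r, c)) : 'cV[F]_(r * c) :=
  \col_k X (cs_row k) (cs_col k).

(* Kronecker product: (A (x) B)[(i1-1)p2+i2, (j1-1)q2+j2] = A_{i1j1} B_{i2j2} *)
Definition kron p1 q1 p2 q2 (A : 'M[F]_(p1, q1)) (B : 'M[F]_(p2, q2))
  : 'M[F]_(p2 * p1, q2 * q1) :=
  \matrix_(a, b) (A (cs_col a) (cs_col b) * B (cs_row a) (cs_row b)).

Definition hadamard r c (A B : 'M[F]_(r, c)) : 'M[F]_(r, c) :=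
  \matrix_(i, j) (A i j * B i j).
Definition ones p : 'cV[F]_p := const_mx 1.

Definition star_linear n q (L : 'M[F]_q -> 'M[F]_n) : Prop :=
  forall V, L (adj V) = adj (L V).

Definition blk n q (Lm : 'M[F]_(n * n, q * q)) (i : 'I_n) (j : 'I_q)
  : 'M[F]_(n, q) := \matrix_(a, c) Lm (cs_index a i) (cs_index c j).

(* Choi matrix [L(E_ij)]_{i,j=1}^q  (nq x nq) *)
Definition choi n q (L : 'M[F]_q -> 'M[F]_n) : 'M[F]_(n * q, n * q) :=
  \matrix_(x, y) L (delta_mx (cs_col x) (cs_col y)) (cs_row x) (cs_row y).

Definition Amat n q m (alpha : 'I_n -> 'I_q -> 'I_m -> F) (k : 'I_m)
  : 'M[F]_(n, q) := \matrix_(i, j) cj (alpha i j k).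
Definition Bmat n q m (beta : 'I_m -> 'I_n -> 'I_q -> F) (k : 'I_m)
  : 'M[F]_(n, q) := \matrix_(i, j) beta k i j.
Definition Hmat n q m (beta : 'I_m -> 'I_n -> 'I_q -> F)
  (Ls : 'I_m -> 'M[F]_(n, q)) : 'M[F]_m :=
  \matrix_(k, l) (adj (ones n) *m hadamard (Bmat beta k) (mconj (Ls l))
                   *m ones q) 0 0.

Definition Ahat_star n q m (A : 'I_m -> 'M[F]_(n, q)) : 'M[F]_(n * q, m) :=
  \matrix_(x, k) cvec (A k) x 0.

Definition Theorem51 : Prop :=
  forall (n q : nat) (L : {linear 'M[F]_q -> 'M[F]_n})
    (Lm : 'M[F]_(n * n, q * q)),
    star_linear L ->
    (forall V : 'M[F]_q, Lm *m cvec V = cvec (L V)) ->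
  let m := \rank (choi L) in
  forall (Ls : 'I_m -> 'M[F]_(n, q)),
    (<<[seq Ls k | k <- enum 'I_m]>> =
     <<[seq blk Lm i j | i <- enum 'I_n, j <- enum 'I_q]>>)%VS ->
  forall (alpha : 'I_n -> 'I_q -> 'I_m -> F),
    (forall i j, blk Lm i j = \sum_k alpha i j k *: Ls k) ->
  forall (beta : 'I_m -> 'I_n -> 'I_q -> F),
    (forall k, Ls k = \sum_i \sum_j beta k i j *: blk Lm i j) ->
  let A := Amat alpha in
  let H := Hmat beta Ls in
  [/\ (forall V : 'M[F]_q,
        L V = \sum_k \sum_l H k l *: (A l *m V *m adj (A k))),
      Lm = \sum_k \sum_l H k l *: kron (mconj (A k)) (A l),
      choi L = \sum_k \sum_l H k l *: (cvec (A l) *m (cvec (mconj (A k)))^T)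
        /\ choi L = Ahat_star A *m H^T *m adj (Ahat_star A),
      adj H = H
    & H \in unitmx].

End Defs.

(* Main.v *)
Require Import Defs.
From HB Require Import structures.
From mathcomp Require Import all_boot all_order all_algebra.
From mathcomp Require Import complex.
From mathcomp Require Import reals.
Set Implicit Arguments. Unset Strict Implicit. Unset Printing Implicit Defensive.
Import Order.TTheory GRing.Theory Num.Theory.
Local Open Scope ring_scope.

Lemma row_index r c (i : 'I_r) (j : 'I_c) : cs_row (cs_index i j) = i.
Proof. apply: val_inj => /=; by rewrite modnMDl modn_small. Qed.

Lemma col_index r c (i : 'I_r) (j : 'I_c) : cs_col (cs_index i j) = j.
Proof.
apply: val_inj => /=; have hi := ltn_ord i.
by rewrite divnMDl ?(leq_ltn_trans _ hi) // divn_small // addn0.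
Qed.

Lemma index_rowcol r c (y : 'I_(r * c)) : cs_index (cs_row y) (cs_col y) = y.
Proof. by apply: val_inj => /=; rewrite -divn_eq. Qed.

Lemma sum_cs (F : fieldType) r c (G : 'I_r -> 'I_c -> F) :
  \sum_(y < r * c) G (cs_row y) (cs_col y) = \sum_i \sum_j G i j.
Proof.
rewrite pair_bigA /=.
rewrite (reindex (fun p : 'I_r * 'I_c => cs_index p.1 p.2)) /=.
  by apply: eq_bigr => -[i j] _; rewrite row_index col_index.
exists (fun y => (cs_row y, cs_col y)) => [[i j] _|y _] /=.
  by rewrite row_index col_index.
by rewrite index_rowcol.
Qed.
From mathcomp Require Import ring.
Section Gen.
Variables (F : fieldType) (cj : {rmorphism F -> F}).
Hypothesis cjK : involutive cj.

Lemma mconjM a b c (X : 'M[F]_(a, b)) (Y : 'M[F]_(b, c)) :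
  mconj cj (X *m Y) = mconj cj X *m mconj cj Y.
Proof. exact: map_mxM. Qed.

Lemma mconjK a b (X : 'M[F]_(a, b)) : mconj cj (mconj cj X) = X.
Proof. by apply/matrixP => i j; rewrite !mxE cjK. Qed.

Lemma mconjT a b (X : 'M[F]_(a, b)) : mconj cj X^T = (mconj cj X)^T.
Proof. by apply/matrixP => i j; rewrite !mxE. Qed.

Lemma adj_delta q (i j : 'I_q) : adj cj (delta_mx i j) = delta_mx j i.
Proof.
apply/matrixP => a b; rewrite !mxE.
by case: (a == j); case: (b == i) => /=; rewrite ?rmorph0 ?rmorph1.
Qed.

Lemma sum4 p1 p2 p3 p4 (f : 'I_p1 -> 'I_p2 -> 'I_p3 -> 'I_p4 -> F) :
  \sum_a \sum_b \sum_c \sum_d f a b c d = \sum_c \sum_d \sum_a \sum_b f a b c d.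
Proof.
rewrite (eq_bigr (fun a => \sum_c \sum_d \sum_b f a b c d)); last first.
  by move=> a _; rewrite exchange_big; apply: eq_bigr => c _; rewrite exchange_big.
by rewrite exchange_big; apply: eq_bigr => c _; rewrite exchange_big.
Qed.

Lemma gen : Theorem51 cj.
Proof.
move=> n q L Lm Hstar HLm m Ls Hspan alpha Halpha beta Hbeta A H.
have lmE a i c j : Lm (cs_index a i) (cs_index c j) = L (delta_mx c j) a i.
  have := congr1 (fun M : 'cV[F]_(n * n) => M (cs_index a i) ord0) (HLm (delta_mx c j)).
  rewrite !mxE row_index col_index => <-.
  rewrite (bigD1 (cs_index c j)) //= big1 ?addr0.
    by rewrite !mxE row_index col_index !eqxx mulr1.
  move=> y hy; rewrite !mxE.
  case: eqP => [hr|]; case: eqP => [hc|] //=; rewrite ?mulr0 //.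
  by move: hy; rewrite -hr -hc index_rowcol eqxx.
have LmE x y : Lm x y = L (delta_mx (cs_row y) (cs_col y)) (cs_row x) (cs_col x).
  by rewrite -lmE !index_rowcol.
have star a i c j : L (delta_mx j c) i a = cj (L (delta_mx c j) a i).
  by have := Hstar (delta_mx c j); rewrite adj_delta => ->; rewrite !mxE.
have Lchoi a i c j : L (delta_mx c j) a i = choi L (cs_index a c) (cs_index i j).
  by rewrite mxE !row_index !col_index.
have choiC : mconj cj (choi L) = (choi L)^T.
  by apply/matrixP => x y; rewrite !mxE star.
pose LH : 'M[F]_(n * q, m) := \matrix_(y, k) Ls k (cs_row y) (cs_col y).
pose Al : 'M[F]_(m, n * q) := \matrix_(k, y) alpha (cs_row y) (cs_col y) k.
pose Be : 'M[F]_(n * q, m) := \matrix_(y, k) beta k (cs_row y) (cs_col y).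
have Ea : choi L = LH *m Al.
  apply/matrixP => x y; rewrite !mxE -lmE.
  have -> : Lm (cs_index (cs_row x) (cs_row y)) (cs_index (cs_col x) (cs_col y))
      = blk Lm (cs_row y) (cs_col y) (cs_row x) (cs_col x) by rewrite mxE.
  rewrite Halpha summxE; apply: eq_bigr => k _; rewrite !mxE mulrC.
  done.
have Eb : LH = choi L *m Be.
  apply/matrixP => y k; rewrite !mxE Hbeta summxE.
  rewrite (eq_bigr (fun x => (fun i j => L (delta_mx (cs_col y) j) (cs_row y) i
     * beta k i j) (cs_row x) (cs_col x))); last by move=> x _; rewrite !mxE.
  rewrite (sum_cs (fun i j => L (delta_mx (cs_col y) j) (cs_row y) i * beta k i j)).
  apply: eq_bigr => i _; rewrite summxE; apply: eq_bigr => j _.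
  by rewrite !mxE -lmE mulrC.
have Ec : Al *m Be = 1%:M.
  have hr : \rank LH^T = m.
    apply/eqP; rewrite eqn_leq mxrank_tr rank_leq_col /=.
    by have := mxrankM_maxl LH Al; rewrite -Ea.
  have e1 : (Al *m Be)^T *m LH^T = 1%:M *m LH^T.
    by rewrite mul1mx -trmx_mul mulmxA -Ea -Eb.
  have hf : row_free LH^T by rewrite /row_free hr.
  have := row_free_inj hf e1.
  by move=> /(congr1 trmx); rewrite trmxK trmx1.
have EH : H = Be^T *m mconj cj LH.
  apply/matrixP => k l; rewrite !mxE.
  rewrite (eq_bigr (fun y => (fun i j => beta k i j * cj (Ls l i j)) (cs_row y) (cs_col y))); last by move=> y _; rewrite !mxE.
  rewrite (sum_cs (fun i j => beta k i j * cj (Ls l i j))) exchange_big /=.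
  apply: eq_bigr => j _; rewrite !mxE mulr1; apply: eq_bigr => i _.
  by rewrite !mxE rmorph1 mul1r.
have EK : LH^T = H *m mconj cj Al.
  by rewrite EH -mulmxA -mconjM -Ea choiC -trmx_mul -Eb.
have Hu : H \in unitmx.
  rewrite -row_free_unit /row_free eqn_leq rank_leq_row /=.
  have := mxrankM_maxl H (mconj cj Al); rewrite -EK mxrank_tr.
  have hr : \rank LH = m.
    apply/eqP; rewrite eqn_leq rank_leq_col /=.
    by have := mxrankM_maxl LH Al; rewrite -Ea.
  by rewrite hr.
have Hh : adj cj H = H.
  rewrite /adj {1}EH mconjM mconjK mconjT trmx_mul trmxK EK.
  by rewrite -mulmxA -mconjM Ec /mconj map_mx1 mulmx1.
have EA : Ahat_star A = (mconj cj Al)^T.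
  by apply/matrixP => x k; rewrite !mxE.
have EA' : adj cj (Ahat_star A) = Al.
  by rewrite EA /adj mconjT mconjK trmxK.
have Emain : choi L = Ahat_star A *m H^T *m adj cj (Ahat_star A).
  by rewrite EA' EA Ea -[LH]trmxK EK trmx_mul.
clearbody H.
have Gfact x y : choi L x y = \sum_k \sum_l H k l *
    (A l (cs_row x) (cs_col x) * alpha (cs_row y) (cs_col y) k).
  rewrite Emain EA' EA mxE; apply: eq_bigr => k _.
  rewrite mxE big_distrl /=; apply: eq_bigr => l _; rewrite !mxE.
  by rewrite mulrA (mulrC (cj _)).
split.
- move=> V; apply/matrixP => a i.
  rewrite {1}(matrix_sum_delta V) linear_sum summxE.
  under eq_bigr => c _ do rewrite linear_sum summxE.
  under eq_bigr => c _ do under eq_bigr => j _ do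
    rewrite linearZ mxE Lchoi Gfact !row_index !col_index big_distrr.
  under eq_bigr => c _ do under eq_bigr => j _ do
    under eq_bigr => k _ do rewrite big_distrr.
  rewrite sum4 summxE; apply: eq_bigr => k _; rewrite summxE.
  apply: eq_bigr => l _; rewrite !mxE big_distrr /=.
  under [RHS]eq_bigr => j _ do rewrite !mxE big_distrl big_distrr /=.
  rewrite [RHS]exchange_big; apply: eq_bigr => c _; apply: eq_bigr => j _.
  by rewrite !mxE cjK /=; ring.
- apply/matrixP => x y; rewrite LmE Lchoi Gfact summxE.
  apply: eq_bigr => k _; rewrite summxE; apply: eq_bigr => l _.
  by rewrite !mxE !row_index !col_index cjK; ring.
- split => //; apply/matrixP => x y; rewrite Gfact summxE.
  apply: eq_bigr => k _; rewrite summxE; apply: eq_bigr => l _.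
  by rewrite !mxE big_ord1 !mxE cjK.
- exact: Hh.
- exact: Hu.
Qed.
End Gen.

Theorem theorem5p1 :
  (forall R : realType, Theorem51 (id : R -> R)) /\
  (forall R : realType, Theorem51 (fun z : R[i] => z^*)).
Proof.
split => R.
- exact: (@gen R idfun (fun x => erefl)).
- exact: (@gen R[i] Num.conj conjCK).
Qed.
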